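(* For every integer $n\ge 2$, $$\mathrm{spt}1_{do}(n)=2p_{de}(n-1)+p_{do}(n-1)\qquad\text{and}\qquad \mathrm{spt}1'_{do}(n)=-p'_{do}(n-1).$$
   Context: For a partition $\pi$, $s(\pi)$ is its smallest part. $\mathrm{Spt}1_{do}(n)$ is the set of partitions $\pi$ of $n$ in which $s(\pi)$ occurs exactly once and the remaining parts are pairwise distinct and each has parity different from that of $s(\pi)$. $B_0(1,n)$ (resp. $B_1(1,n)$) is the number of $\pi\in\mathrm{Spt}1_{do}(n)$ whose number of parts greater than $s(\pi)$ is even (resp. odd); $\mathrm{spt}1_{do}(n)=B_0(1,n)+B_1(1,n)$ and $\mathrm{spt}1'_{do}(n)=B_0(1,n)-B_1(1,n)$. $p_{de}(n)$ (resp. $p_{do}(n)$) is the number of partitions of $n$ into distinct even (resp. distinct odd) parts; $p'_{do}(n)$ is the number of partitions of $n$ into distinct odd parts with an even number of parts minus the number with an odd number of parts; all equal $1$ at $n=0$. *)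

(* Defs.v *)
From mathcomp Require Import all_boot all_order all_algebra.
Set Implicit Arguments. Unset Strict Implicit. Unset Printing Implicit Defensive.

(* A partition of n is represented by its multiplicity function:
   f : {ffun 'I_n -> 'I_n.+1}, where f i is the number of times the part
   (i.+1) occurs; the parts are 1..n, each with multiplicity at most n. *)
Definition ptn (n : nat) := {ffun 'I_n -> 'I_n.+1}.

Definition partv n (i : 'I_n) : nat := i.+1.

Definition is_partition n (f : ptn n) : bool :=
  \sum_(i < n) partv i * f i == n.

Definition nparts n (f : ptn n) : nat := \sum_(i < n) (f i : nat).

Definition spt1do_at n (f : ptn n) (i : 'I_n) : bool :=
  [&& (f i == 1 :> nat),
      [forall j : 'I_n, (j < i) ==> (f j == 0 :> nat)] &
      [forall j : 'I_n, (i < j) ==>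
         ((f j <= 1) && ((0 < f j) ==> (odd (partv j) != odd (partv i))))]].

Definition nparts_gt n (f : ptn n) (i : 'I_n) : nat :=
  \sum_(j < n | i < j) (f j : nat).

Definition Spt1do n : {set ptn n} :=
  [set f | is_partition f && [exists i, spt1do_at f i]].

Definition B0 n : nat :=
  #|[set f : ptn n | is_partition f &&
       [exists i, spt1do_at f i && ~~ odd (nparts_gt f i)]]|.
Definition B1 n : nat :=
  #|[set f : ptn n | is_partition f &&
       [exists i, spt1do_at f i && odd (nparts_gt f i)]]|.

Definition spt1do n : nat := B0 n + B1 n.
Definition spt1do' n : int := (B0 n)%:Z - (B1 n)%:Z.

Definition distinct_parity n (par : bool) (f : ptn n) : bool :=
  [forall i : 'I_n, (f i <= 1) && ((0 < f i) ==> (odd (partv i) == par))].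

Definition pde n : nat := #|[set f : ptn n | is_partition f && distinct_parity false f]|.
Definition pdo n : nat := #|[set f : ptn n | is_partition f && distinct_parity true f]|.
Definition pdo' n : int :=
  (#|[set f : ptn n | [&& is_partition f, distinct_parity true f & ~~ odd (nparts f)]]|)%:Z
  - (#|[set f : ptn n | [&& is_partition f, distinct_parity true f & odd (nparts f)]]|)%:Z.

(* Main.v *)
Require Import Defs.
From mathcomp Require Import all_boot all_order all_algebra.
From mathcomp Require Import zify.
Set Implicit Arguments. Unset Strict Implicit. Unset Printing Implicit Defensive.

Definition mf n (f : ptn n) (k : nat) : nat :=
  if k is k'.+1 then (if @insub _ _ 'I_n k' is Some i then (f i : nat) else 0) else 0.

Lemma mf_ord n (f : ptn n) (i : 'I_n) : mf f i.+1 = f i.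
Proof. by rewrite /mf valK. Qed.

Lemma mf0 n (f : ptn n) : mf f 0 = 0.
Proof. by []. Qed.

Lemma mf_out n (f : ptn n) k : n < k -> mf f k = 0.
Proof. case: k => [//|k] H /=. by rewrite insubF // ltnNge -ltnS H. Qed.

Lemma mf_case n (f : ptn n) k : mf f k = 0 \/ exists i : 'I_n, k = i.+1.
Proof.
case: k => [|k]; first by left.
case: (ltnP k n) => H; first by right; exists (Ordinal H).
by left; apply: mf_out.
Qed.

Lemma mf_inj n (f1 f2 : ptn n) : (forall k, mf f1 k = mf f2 k) -> f1 = f2.
Proof. move=> H; apply/ffunP => i; apply/val_inj; by rewrite /= -!mf_ord H. Qed.

Definition mk n (h : nat -> nat) : ptn n := [ffun i : 'I_n => inord (h i.+1)].

Lemma mf_mk n h k : 0 < k <= n -> h k <= n -> mf (mk n h) k = h k.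
Proof.
case: k => [//|k] /= Hk Hh.
by rewrite insubT /= ffunE inordK.
Qed.

Definition S L (w h : nat -> nat) := \sum_(i < L) w i.+1 * h i.+1.

Lemma S_recr L w h : S L.+1 w h = S L w h + w L.+1 * h L.+1.
Proof. by rewrite /S big_ord_recr. Qed.

Lemma S_ext L w h1 h2 : (forall k, 0 < k <= L -> h1 k = h2 k) -> S L w h1 = S L w h2.
Proof. move=> H; apply: eq_bigr => i _; by rewrite H // ltn_ord. Qed.

Lemma S_ind L w a : \sum_(i < L) w i.+1 * (i.+1 == a) = if 0 < a <= L then w a else 0.
Proof.
elim: L => [|L IH]; first by rewrite big_ord0; case: a.
rewrite big_ord_recr /= IH.
case: (eqVneq L.+1 a) => [<-|ne]; first by rewrite ltnn andbF muln1 leqnn.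
by rewrite muln0 addn0 (leq_eqVlt a L.+1) ltnS (eq_sym a) (negbTE ne).
Qed.

Lemma S_mod L w h h' a b : (forall k, 0 < k -> h' k + (k == a) = h k + (k == b)) ->
  S L w h' + (if 0 < a <= L then w a else 0) = S L w h + (if 0 < b <= L then w b else 0).
Proof.
move=> H; rewrite -!S_ind /S -!big_split /=; apply: eq_bigr => i _.
by rewrite -!mulnDr H.
Qed.

Lemma isp_W n (f : ptn n) : is_partition f = (S n id (mf f) == n).
Proof. by rewrite /is_partition /S; congr (_ == _); apply: eq_bigr => i _; rewrite mf_ord. Qed.

Lemma np_S n (f : ptn n) : nparts f = S n (fun _ => 1) (mf f).
Proof. by rewrite /nparts /S; apply: eq_bigr => i _; rewrite mf_ord mul1n. Qed.

Lemma dp_charE n par (f : ptn n) : distinct_parity par f ->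
  forall k, mf f k <= 1 /\ (0 < mf f k -> odd k = par).
Proof.
move=> /forallP H k; case: (mf_case f k) => [->//|[i ->]].
rewrite mf_ord; move: (H i) => /andP[-> /implyP H2]; split=> // /H2 /eqP.
by [].
Qed.

Lemma dp_charI n par (f : ptn n) :
  (forall k, mf f k <= 1 /\ (0 < mf f k -> odd k = par)) -> distinct_parity par f.
Proof.
move=> H; apply/forallP => i; move: (H i.+1); rewrite mf_ord => -[-> H2] /=.
by apply/implyP => /H2 /eqP.
Qed.

Definition sm_at n (g : ptn n) (i : 'I_n) :=
  (0 < g i) && [forall j : 'I_n, (j < i) ==> (g j == 0 :> nat)].
Definition sm n (g : ptn n) : nat := if [pick i | sm_at g i] is Some i then i.+1 else 0.

Lemma smP n (g : ptn n) t : 0 < mf g t -> (forall k, k < t -> mf g k = 0) -> sm g = t.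
Proof.
case: (mf_case g t) => [->//|[i ->]]; rewrite mf_ord => Hp Hl.
have Hi : sm_at g i.
  rewrite /sm_at Hp /=; apply/forallP => j; apply/implyP => Hj.
  by rewrite -mf_ord Hl.
rewrite /sm; case: pickP => [j Hj|/(_ i)]; last by rewrite Hi.
congr _.+1; move: Hi Hj => /andP[Hi /forallP Hi'] /andP[Hj /forallP Hj'].
case: (ltngtP i j) => H.
- by move: (implyP (Hj' i) H) => /eqP E; rewrite E in Hi.
- by move: (implyP (Hi' j) H) => /eqP E; rewrite E in Hj.
- by rewrite H.
Qed.

Lemma sm_ex n (g : ptn n) : (exists k, 0 < mf g k) ->
  [/\ 0 < mf g (sm g), forall k, k < sm g -> mf g k = 0 & 0 < sm g].
Proof.
move=> H; case: (ex_minnP H) => t Ht Hmin.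
have Hl : forall k, k < t -> mf g k = 0.
  move=> k Hk; case: (posnP (mf g k)) => // /Hmin; by rewrite leqNgt Hk.
rewrite (smP Ht Hl); split => //; case: t Ht {Hmin Hl} => //.
Qed.

Definition SptP n (f : ptn n) := is_partition f && [exists i, spt1do_at f i].

Lemma spt_char n (f : ptn n) : SptP f ->
  [/\ S n id (mf f) = n, 0 < sm f <= n, mf f (sm f) = 1,
      (forall k, k < sm f -> mf f k = 0) &
      (forall k, sm f < k -> mf f k <= 1 /\ (0 < mf f k -> odd k != odd (sm f)))].
Proof.
move=> /andP[Hp /existsP[i /and3P[H1 /forallP Hl /forallP Hg]]].
have Hlo : forall k, k < i.+1 -> mf f k = 0.
  move=> k Hk; case: (mf_case f k) => [//|[j Ej]]; subst k.
  by rewrite mf_ord; apply/eqP; apply: (implyP (Hl j)).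
have Hs : sm f = i.+1 by apply: smP => //; rewrite mf_ord (eqP H1).
rewrite Hs mf_ord (eqP H1); split => //.
- by move: Hp; rewrite isp_W => /eqP.
- exact: ltn_ord.
- move=> k Hk; case: (mf_case f k) => [->//|[j Ej]]; subst k.
  rewrite mf_ord; move: (implyP (Hg j) Hk) => /andP[-> /implyP H2]; split=> //.
Qed.

Lemma spt_intro n (f : ptn n) s : S n id (mf f) = n -> mf f s = 1 ->
  (forall k, k < s -> mf f k = 0) ->
  (forall k, s < k -> mf f k <= 1 /\ (0 < mf f k -> odd k != odd s)) ->
  SptP f /\ sm f = s.
Proof.
move=> HW Hs Hl Hg.
case: (mf_case f s) => [|[i Ei]]; first by rewrite Hs.
subst s; split; last by apply: smP => //; rewrite Hs.
rewrite /SptP isp_W HW eqxx /=; apply/existsP; exists i.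
rewrite /spt1do_at -mf_ord Hs eqxx /=; apply/andP; split.
- by apply/forallP => j; apply/implyP => Hj; rewrite -mf_ord Hl.
- apply/forallP => j; apply/implyP => Hj; rewrite -mf_ord.
  case: (Hg j.+1 Hj) => -> H2 /=; apply/implyP => /H2.
  by [].
Qed.

Lemma npgt n (f : ptn n) i : spt1do_at f i -> nparts_gt f i = (nparts f).-1.
Proof.
move=> /and3P[H1 /forallP Hl _].
rewrite /nparts /nparts_gt [in RHS](bigID (fun j : 'I_n => i < j)) /=.
rewrite [X in _ + X](bigD1 i) ?ltnn //= (eqP H1) [X in 1 + X]big1 ?addn0 ?addn1 //.
move=> j /andP[Hj Hji]; apply/eqP; apply: (implyP (Hl j)).
by rewrite ltn_neqAle leqNgt Hj andbT; apply: contra Hji => /eqP E; apply/eqP/val_inj.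
Qed.

Lemma card_bij (T U : finType) (A : {set T}) (B : {set U}) (f : T -> U) (g : U -> T) :
  (forall x, x \in A -> f x \in B) -> (forall y, y \in B -> g y \in A) ->
  (forall x, x \in A -> g (f x) = x) -> (forall y, y \in B -> f (g y) = y) -> #|A| = #|B|.
Proof.
move=> fAB gBA gf fg; apply/eqP; rewrite eqn_leq; apply/andP; split.
- rewrite -(card_in_imset (f := f) (D := A)); last first.
    by move=> x y Hx Hy E; rewrite -(gf x Hx) -(gf y Hy) E.
  by apply: subset_leq_card; apply/subsetP => y /imsetP[x Hx ->]; apply: fAB.
- rewrite -(card_in_imset (f := g) (D := B)); last first.
    by move=> x y Hx Hy E; rewrite -(fg x Hx) -(fg y Hy) E.
  by apply: subset_leq_card; apply/subsetP => y /imsetP[x Hx ->]; apply: gBA.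
Qed.

Definition dec (s : nat) (h : nat -> nat) k := if k == s.-1 then 1 else if k == s then 0 else h k.
Definition inc t (h : nat -> nat) k := if k == t then 0 else if k == t.+1 then 1 else h k.
Definition add1 (h : nat -> nat) k := if k == 1 then 1 else h k.
Definition Phi N (f : ptn N.+1) : ptn N := mk N (dec (sm f) (mf f)).
Definition Psi1 N (g : ptn N) : ptn N.+1 := mk N.+1 (inc (sm g) (mf g)).
Definition Psi2 N (g : ptn N) : ptn N.+1 := mk N.+1 (add1 (mf g)).

Lemma nparts_pos n (f : ptn n) : SptP f -> 0 < nparts f.
Proof.
move=> /andP[_ /existsP[i /and3P[H1 _ _]]].
by rewrite /nparts (bigD1 i) //= (eqP H1).
Qed.

Lemma Phi_spec N (f : ptn N.+1) : 0 < N -> SptP f ->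
  [/\ forall k, 0 < k -> mf (Phi f) k = dec (sm f) (mf f) k,
      S N id (mf (Phi f)) = N,
      nparts (Phi f) + 1 = nparts f + (1 < sm f) &
      distinct_parity (~~ odd (sm f)) (Phi f)].
Proof.
move=> HN Hf; case: (spt_char Hf) => HW /andP[Hs0 HsN] H1 Hlo Hhi.
set s := sm f in HW Hs0 HsN H1 Hlo Hhi *; set h := mf f in HW H1 Hlo Hhi *.
set h' := dec s h.
have Hsp : s = s.-1.+1 by rewrite prednK.
have Hpt : forall k, 0 < k -> h' k + (k == s) = h k + (k == s.-1).
  move=> k Hk; rewrite /h' /dec.
  case: (eqVneq k s.-1) => [->|ne1].
    by rewrite Hlo ?ltn_predL // ltn_eqF // ltn_predL.
  case: (eqVneq k s) => [->|ne2]; first by rewrite H1.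
  by [].
have Hle : forall k, h' k <= 1.
  move=> k; rewrite /h' /dec; case: (eqVneq k s.-1) => // _.
  case: (eqVneq k s) => // ne; case: (ltngtP k s) => Hk.
  - by rewrite Hlo.
  - by case: (Hhi k Hk).
  - by move: ne; rewrite Hk eqxx.
have HWn : S N.+1 id h' = N.
  move: (S_mod N.+1 id Hpt); rewrite Hs0 HsN HW /=.
  rewrite (leq_trans (leq_pred s) HsN) andbT.
  case: (posnP s.-1) => H /=; lia.
have Hn0 : h' N.+1 = 0.
  move: HWn; rewrite S_recr /=; case: (h' N.+1) => [//|k]; rewrite mulnS; lia.
have Hmf : forall k, 0 < k -> mf (Phi f) k = h' k.
  move=> k Hk; case: (leqP k N) => HkN.
    by rewrite /Phi mf_mk ?Hk ?HkN //; apply: leq_trans (Hle k) _.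
  rewrite mf_out //; case: (ltngtP k N.+1) => Hk2; first by lia.
    rewrite /h' /dec ifN_eq; last by apply/eqP; lia.
    by rewrite ifN_eq; [rewrite /h mf_out|apply/eqP; lia].
  by rewrite Hk2.
have HWN : S N id (mf (Phi f)) = N.
  by rewrite (S_ext _ (h2 := h')) => [|k /andP[Hk _]]; [move: HWn; rewrite S_recr Hn0; lia|apply: Hmf].
split => //.
- rewrite !np_S (S_ext _ (h2 := h')) => [|k /andP[Hk _]]; last by apply: Hmf.
  move: (S_mod N.+1 (fun _ => 1) Hpt); rewrite Hs0 HsN S_recr Hn0 /= muln0 addn0.
  rewrite (leq_trans (leq_pred s) HsN) andbT.
  rewrite -/h; case: (posnP s.-1) => H /=; lia.
- apply: dp_charI => k; case: (posnP k) => [->|Hk]; first by rewrite mf0.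
  rewrite Hmf //; split => // Hp; move: Hp; rewrite /h' /dec.
  case: (eqVneq k s.-1) => [-> _|ne1].
    by move: Hs0; case: (s) => // s' _ /=; rewrite negbK.
  case: (eqVneq k s) => // ne2 Hp.
  case: (ltngtP k s) => Hk2.
  - by move: Hp; rewrite Hlo.
  - by case: (Hhi k Hk2) => _ /(_ Hp); case: (odd k); case: (odd s).
  - by move: ne2; rewrite Hk2 eqxx.
Qed.

Lemma g_sm N (g : ptn N) par : 0 < N -> S N id (mf g) = N -> distinct_parity par g ->
  [/\ 0 < sm g <= N, mf g (sm g) = 1, (forall k, k < sm g -> mf g k = 0),
      odd (sm g) = par & mf g (sm g).+1 = 0].
Proof.
move=> HN HW /dp_charE Hdp.
have Hex : exists k, 0 < mf g k.
  case: (pickP (fun i : 'I_N => 0 < g i)) => [i Hi|H0]; first by exists i.+1; rewrite mf_ord.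
  suff : S N id (mf g) = 0 by lia.
  apply: big1 => i _; move: (H0 i) => /negbT; rewrite mf_ord -leqNgt leqn0 => /eqP ->.
  by rewrite muln0.
case: (sm_ex Hex) => Hp Hlo Hs0.
have Hle : sm g <= N.
  by case: (leqP (sm g) N) => // H; move: Hp; rewrite mf_out.
have H1 : mf g (sm g) = 1 by case: (Hdp (sm g)) => H _; lia.
have Hpar : odd (sm g) = par by case: (Hdp (sm g)) => _ ->.
split => //; first by rewrite Hs0 Hle.
case: (posnP (mf g (sm g).+1)) => // Hq.
by case: (Hdp (sm g).+1) => _ /(_ Hq) /=; rewrite Hpar; case: (par).
Qed.

Lemma Psi1_spec N (g : ptn N) par : 0 < N -> S N id (mf g) = N -> distinct_parity par g ->
  [/\ forall k, 0 < k -> mf (Psi1 g) k = inc (sm g) (mf g) k, SptP (Psi1 g),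
      sm (Psi1 g) = (sm g).+1 & nparts (Psi1 g) = nparts g].
Proof.
move=> HN HW Hdp; case: (g_sm HN HW Hdp) => /andP[Ht0 HtN] H1 Hlo Hpar Hq.
move/dp_charE: Hdp => Hdp.
set t := sm g in Ht0 HtN H1 Hlo Hpar Hq *; set h := mf g in HW H1 Hlo Hq Hdp *.
set h' := inc t h.
have Hpt : forall k, 0 < k -> h' k + (k == t) = h k + (k == t.+1).
  move=> k Hk; rewrite /h' /inc.
  case: (eqVneq k t) => [->|ne1]; first by rewrite H1 ?eqxx (ltn_eqF (ltnSn t)).
  by case: (eqVneq k t.+1) => [->|ne2]; rewrite ?Hq.
have Hle : forall k, h' k <= 1.
  move=> k; rewrite /h' /inc; case: (eqVneq k t) => // _.
  by case: (eqVneq k t.+1) => // _; case: (Hdp k).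
have Hhn : h N.+1 = 0 by rewrite /h mf_out.
have Hmf : forall k, 0 < k -> mf (Psi1 g) k = h' k.
  move=> k Hk; case: (leqP k N.+1) => HkN.
    by rewrite /Psi1 mf_mk ?Hk ?HkN //; apply: leq_trans (Hle k) _.
  rewrite mf_out // /h' /inc ifN_eq; last by apply/eqP; lia.
  by rewrite ifN_eq; [rewrite /h mf_out //; lia|apply/eqP; lia].
have Hmod := S_mod N.+1 _ Hpt.
have HWn : S N.+1 id (mf (Psi1 g)) = N.+1.
  rewrite (S_ext _ (h2 := h')) => [|k /andP[Hk _]]; last by apply: Hmf.
  move: (Hmod id); rewrite !S_recr Hhn HW Ht0 (leq_trans HtN (leqnSn N)) /=.
  rewrite ltnS HtN; lia.
have Hsp : SptP (Psi1 g) /\ sm (Psi1 g) = t.+1.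
  apply: spt_intro => //.
  - by rewrite Hmf // /h' /inc ifN_eq ?eqxx //; apply/eqP; lia.
  - move=> k Hk; case: (posnP k) => [->|Hk0]; first by rewrite mf0.
    rewrite Hmf // /h' /inc; case: (eqVneq k t) => // ne.
    by rewrite ifN_eq; [apply: Hlo; lia|apply/eqP; lia].
  - move=> k Hk; rewrite Hmf; last by lia.
    rewrite /h' /inc ifN_eq; last by apply/eqP; lia.
    rewrite ifN_eq; last by apply/eqP; lia.
    case: (Hdp k) => -> H2; split => // /H2 ->.
    by rewrite /= Hpar; case: (par).
case: Hsp => Hsp Hsm; split => //.
rewrite !np_S (S_ext _ (h2 := h')) => [|k /andP[Hk _]]; last by apply: Hmf.
move: (Hmod (fun _ => 1)); rewrite !S_recr Hhn Ht0 (leq_trans HtN (leqnSn N)) /=.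
rewrite ltnS HtN /= -/h; lia.
Qed.

Lemma Psi2_spec N (g : ptn N) : 0 < N -> S N id (mf g) = N -> distinct_parity false g ->
  [/\ forall k, 0 < k -> mf (Psi2 g) k = add1 (mf g) k, SptP (Psi2 g),
      sm (Psi2 g) = 1 & nparts (Psi2 g) = (nparts g).+1].
Proof.
move=> HN HW /dp_charE Hdp.
set h := mf g in HW Hdp *; set h' := add1 h.
have H1 : h 1 = 0.
  by case: (posnP (h 1)) => // Hq; case: (Hdp 1) => _ /(_ Hq).
have Hpt : forall k, 0 < k -> h' k + (k == 0) = h k + (k == 1).
  move=> k Hk; rewrite /h' /add1 (gtn_eqF Hk).
  by case: (eqVneq k 1) => [->|ne]; rewrite ?H1.
have Hle : forall k, h' k <= 1.
  by move=> k; rewrite /h' /add1; case: (eqVneq k 1) => // _; case: (Hdp k).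
have Hhn : h N.+1 = 0 by rewrite /h mf_out.
have Hmf : forall k, 0 < k -> mf (Psi2 g) k = h' k.
  move=> k Hk; case: (leqP k N.+1) => HkN.
    by rewrite /Psi2 mf_mk ?Hk ?HkN //; apply: leq_trans (Hle k) _.
  rewrite mf_out // /h' /add1 ifN_eq; last by apply/eqP; lia.
  by rewrite /h mf_out //; lia.
have Hmod := S_mod N.+1 _ Hpt.
have HWn : S N.+1 id (mf (Psi2 g)) = N.+1.
  rewrite (S_ext _ (h2 := h')) => [|k /andP[Hk _]]; last by apply: Hmf.
  move: (Hmod id); rewrite !S_recr Hhn HW /=; lia.
have Hsp : SptP (Psi2 g) /\ sm (Psi2 g) = 1.
  apply: spt_intro => //.
  - by rewrite Hmf.
  - by move=> k; rewrite ltnS leqn0 => /eqP ->; rewrite mf0.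
  - move=> k Hk; rewrite Hmf; last by lia.
    rewrite /h' /add1 ifN_eq; last by apply/eqP; lia.
    by case: (Hdp k) => -> H2; split => // /H2 ->.
case: Hsp => Hsp Hsm; split => //.
rewrite !np_S (S_ext _ (h2 := h')) => [|k /andP[Hk _]]; last by apply: Hmf.
move: (Hmod (fun _ => 1)); rewrite !S_recr Hhn /= -/h; lia.
Qed.

Lemma PsiPhi1 N (f : ptn N.+1) : 0 < N -> SptP f -> 1 < sm f -> Psi1 (Phi f) = f.
Proof.
move=> HN Hf Hs1; case: (spt_char Hf) => _ /andP[Hs0 HsN] H1 Hlo Hhi.
case: (Phi_spec HN Hf) => Hmf HW _ Hdp.
have Hsm : sm (Phi f) = (sm f).-1.
  apply: smP; first by rewrite Hmf; [rewrite /dec eqxx|lia].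
  move=> k Hk; case: (posnP k) => [->|Hk0]; first by rewrite mf0.
  rewrite Hmf // /dec ifN_eq; last by apply/eqP; lia.
  by rewrite ifN_eq; [apply: Hlo; lia|apply/eqP; lia].
case: (Psi1_spec HN HW Hdp) => Hmf2 _ _ _.
apply: mf_inj => k; case: (posnP k) => [->|Hk0]; first by rewrite !mf0.
rewrite Hmf2 // Hsm /inc; case: (eqVneq k (sm f).-1) => [->|ne1].
  by rewrite Hlo //; lia.
case: (eqVneq k (sm f).-1.+1) => [->|ne2]; first by rewrite prednK ?H1 //; lia.
rewrite Hmf // /dec ifN_eq // ifN_eq //; apply/eqP; lia.
Qed.

Lemma PhiPsi1 N (g : ptn N) par : 0 < N -> S N id (mf g) = N -> distinct_parity par g ->
  Phi (Psi1 g) = g.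
Proof.
move=> HN HW Hdp; case: (g_sm HN HW Hdp) => /andP[Ht0 HtN] H1 Hlo Hpar Hq.
case: (Psi1_spec HN HW Hdp) => Hmf Hsp Hsm _.
case: (Phi_spec HN Hsp) => Hmf2 _ _ _.
apply: mf_inj => k; case: (posnP k) => [->|Hk0]; first by rewrite !mf0.
rewrite Hmf2 // Hsm /dec /=; case: (eqVneq k (sm g)) => [->|ne1]; first by rewrite H1.
case: (eqVneq k (sm g).+1) => [->|ne2]; first by rewrite Hq.
by rewrite Hmf // /inc ifN_eq // ifN_eq.
Qed.

Lemma PsiPhi2 N (f : ptn N.+1) : 0 < N -> SptP f -> sm f = 1 -> Psi2 (Phi f) = f.
Proof.
move=> HN Hf Hs1; case: (spt_char Hf) => _ _ H1 _ _.
case: (Phi_spec HN Hf) => Hmf HW _ Hdp; rewrite Hs1 /= in Hdp.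
case: (Psi2_spec HN HW Hdp) => Hmf2 _ _ _.
apply: mf_inj => k; case: (posnP k) => [->|Hk0]; first by rewrite !mf0.
rewrite Hmf2 // /add1; case: (eqVneq k 1) => [->|ne1]; first by rewrite -Hs1 H1.
rewrite Hmf // /dec Hs1 /= ifN_eq ?ifN_eq //; apply/eqP; lia.
Qed.

Lemma PhiPsi2 N (g : ptn N) : 0 < N -> S N id (mf g) = N -> distinct_parity false g ->
  Phi (Psi2 g) = g.
Proof.
move=> HN HW Hdp.
case: (Psi2_spec HN HW Hdp) => Hmf Hsp Hsm _.
case: (Phi_spec HN Hsp) => Hmf2 _ _ _.
have H1 : mf g 1 = 0.
  by case: (posnP (mf g 1)) => // Hq; case: (dp_charE Hdp 1) => _ /(_ Hq).
apply: mf_inj => k; case: (posnP k) => [->|Hk0]; first by rewrite !mf0.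
rewrite Hmf2 // Hsm /dec /=; case: (eqVneq k 0) => [E|ne0]; first by lia.
case: (eqVneq k 1) => [->|ne1]; first by rewrite H1.
by rewrite Hmf // /add1 ifN_eq.
Qed.

Definition Sp N b : {set ptn N.+1} := [set f | SptP f && (odd (nparts f).-1 == b)].
Definition Dp N par c : {set ptn N} :=
  [set g | [&& is_partition g, distinct_parity par g & odd (nparts g) == c]].

Lemma odd_predE x b : 0 < x -> (odd x.-1 == b) = (odd x == ~~ b).
Proof. by case: x => //= x _; case: (odd x); case: b. Qed.

Lemma bij_even N b : 0 < N ->
  #|Sp N b :&: [set f | ~~ odd (sm f)]| = #|Dp N true (~~ b)|.
Proof.
move=> HN; apply: (card_bij (f := @Phi N) (g := @Psi1 N)).
- move=> f; rewrite !inE => /andP[/andP[Hf Hb] He].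
  case: (spt_char Hf) => _ /andP[Hs0 _] _ _ _.
  case: (Phi_spec HN Hf) => _ HW Hnp Hdp.
  have Hs1 : 1 < sm f by move: He Hs0; case: (sm f) => // -[].
  rewrite isp_W HW eqxx /= (negbTE He) /= in Hdp *; rewrite Hdp /=.
  rewrite Hs1 in Hnp; have -> : nparts (Phi f) = nparts f by lia.
  by rewrite -odd_predE // nparts_pos.
- move=> g; rewrite !inE isp_W => /and3P[/eqP HW Hdp Hb].
  case: (Psi1_spec HN HW Hdp) => _ Hsp Hsm Hnp.
  case: (g_sm HN HW Hdp) => _ _ _ Hpar _.
  by rewrite Hsp Hsm /= Hpar Hnp odd_predE ?Hb // -Hnp nparts_pos.
- move=> f; rewrite !inE => /andP[/andP[Hf _] He]; apply: PsiPhi1 => //.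
  case: (spt_char Hf) => _ /andP[Hs0 _] _ _ _.
  by move: He Hs0; case: (sm f) => // -[].
- move=> g; rewrite !inE isp_W => /and3P[/eqP HW Hdp _]; exact: PhiPsi1 HW Hdp.
Qed.

Lemma bij_one N b : 0 < N ->
  #|(Sp N b :\: [set f | ~~ odd (sm f)]) :&: [set f | sm f == 1]| = #|Dp N false b|.
Proof.
move=> HN; apply: (card_bij (f := @Phi N) (g := @Psi2 N)).
- move=> f; rewrite !inE => /andP[/and3P[_ Hf Hb] /eqP Hs1].
  case: (Phi_spec HN Hf) => _ HW Hnp Hdp.
  rewrite isp_W HW eqxx /= Hs1 /= in Hdp Hnp *; rewrite Hdp /=.
  by have -> : nparts (Phi f) = (nparts f).-1 by lia.
- move=> g; rewrite !inE isp_W => /and3P[/eqP HW Hdp Hb].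
  case: (Psi2_spec HN HW Hdp) => _ Hsp Hsm Hnp.
  by rewrite Hsp Hsm /= Hnp /= Hb.
- move=> f; rewrite !inE => /andP[/and3P[_ Hf _] /eqP Hs1]; exact: PsiPhi2.
- move=> g; rewrite !inE isp_W => /and3P[/eqP HW Hdp _]; exact: PhiPsi2.
Qed.

Lemma bij_odd N b : 0 < N ->
  #|(Sp N b :\: [set f | ~~ odd (sm f)]) :\: [set f | sm f == 1]| = #|Dp N false (~~ b)|.
Proof.
move=> HN; apply: (card_bij (f := @Phi N) (g := @Psi1 N)).
- move=> f; rewrite !inE => /and4P[Hs1 Ho Hf Hb].
  case: (spt_char Hf) => _ /andP[Hs0 _] _ _ _.
  case: (Phi_spec HN Hf) => _ HW Hnp Hdp.
  have Hs1' : 1 < sm f by move: Hs1 Hs0; case: (sm f) => // -[].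
  rewrite negbK in Ho; rewrite isp_W HW eqxx /= Ho /= in Hdp *; rewrite Hdp /=.
  rewrite Hs1' in Hnp; have -> : nparts (Phi f) = nparts f by lia.
  by rewrite -odd_predE // nparts_pos.
- move=> g; rewrite !inE isp_W => /and3P[/eqP HW Hdp Hb].
  case: (Psi1_spec HN HW Hdp) => _ Hsp Hsm Hnp.
  case: (g_sm HN HW Hdp) => /andP[Ht0 _] _ _ Hpar _.
  rewrite Hsp Hsm /= Hpar /= Hnp odd_predE ?Hb ?andbT; last by rewrite -Hnp nparts_pos.
  by move: Ht0 Hpar; case: (sm g).
- move=> f; rewrite !inE => /and4P[Hs1 Ho Hf _]; apply: PsiPhi1 => //.
  case: (spt_char Hf) => _ /andP[Hs0 _] _ _ _.
  by move: Hs1 Hs0; case: (sm f) => // -[].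
- move=> g; rewrite !inE isp_W => /and3P[/eqP HW Hdp _]; exact: PhiPsi1 HW Hdp.
Qed.

Lemma B_Sp N (b : bool) :
  #|[set f : ptn N.+1 | is_partition f &&
      [exists i, spt1do_at f i && (odd (nparts_gt f i) == b)]]| = #|Sp N b|.
Proof.
apply: eq_card => f; rewrite /Sp !inE; apply/idP/idP.
- move=> /andP[Hp /existsP[i /andP[Hi Ho]]].
  rewrite /SptP Hp /= -(npgt Hi) Ho andbT; apply/existsP; by exists i.
- move=> /andP[/andP[Hp /existsP[i Hi]] Ho]; rewrite Hp /=; apply/existsP; exists i.
  by rewrite Hi (npgt Hi).
Qed.

Lemma Sp_split N b : 0 < N ->
  #|Sp N b| = #|Dp N true (~~ b)| + #|Dp N false b| + #|Dp N false (~~ b)|.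
Proof.
move=> HN.
rewrite -(cardsID [set f | ~~ odd (sm f)] (Sp N b)) bij_even //.
rewrite -(cardsID [set f | sm f == 1] (Sp N b :\: _)) bij_one // bij_odd //.
by rewrite addnA.
Qed.

Lemma D_split N par : #|[set g : ptn N | is_partition g && distinct_parity par g]|
  = #|Dp N par false| + #|Dp N par true|.
Proof.
rewrite -(cardsID [set g : ptn N | odd (nparts g)] [set g : ptn N | is_partition g && distinct_parity par g]).
rewrite addnC; congr (_ + _); apply: eq_card => g; rewrite /Dp !inE;
  by case: (odd _); rewrite ?andbT ?andbF.
Qed.

Lemma pdo'E N : pdo' N = (#|Dp N true false|%:Z - #|Dp N true true|%:Z)%R.
Proof.
rewrite /pdo'; congr (_%:Z - _%:Z)%R; apply: eq_card => g; rewrite /Dp !inE;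
  by case: (odd _).
Qed.

Unset Implicit Arguments.
Import GRing.Theory.

Theorem theorem3p1 (n : nat) (hn : (2 <= n)%N) :
  spt1do n = (2 * pde n.-1 + pdo n.-1)%N /\
  spt1do' n = (- pdo' n.-1)%R.
Proof.
case: n hn => [//|N] hn; have HN : 0 < N by [].
rewrite /= /spt1do /spt1do' /B0 /B1 /pde /pdo pdo'E !D_split.
have E0 : #|[set f : ptn N.+1 | is_partition f &&
       [exists i, spt1do_at f i && ~~ odd (nparts_gt f i)]]| = #|Sp N false|.
  rewrite -B_Sp; apply: eq_card => f; rewrite !inE.
  by congr (_ && _); apply: eq_existsb => i; case: (odd _).
have E1 : #|[set f : ptn N.+1 | is_partition f &&
       [exists i, spt1do_at f i && odd (nparts_gt f i)]]| = #|Sp N true|.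
  rewrite -B_Sp; apply: eq_card => f; rewrite !inE.
  by congr (_ && _); apply: eq_existsb => i; case: (odd _).
rewrite E0 E1 !Sp_split //=; split; lia.
Qed.
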